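(* Let $f$ be a 3-CNF formula with clauses $C_1,\dots,C_m$ over variables $x_1,\dots,x_n$, each clause being a disjunction of three literal occurrences. Let $G$ be the graph constructed as follows: for each clause $C_i=x\vee y\vee z$ introduce four vertices $x^i,y^i,z^i,c^i$ forming a clique $G_i$, where $x^i,y^i,z^i$ are associated with the literals $x,y,z$ of $C_i$ (so $G$ has $4m$ vertices); additionally, for any two vertices $u,v$ in different cliques $G_i\ne G_j$ such that the literal associated with $u$ is the negation of the literal associated with $v$, add the edge $uv$. Then $\alpha(G)=m$, $\mathrm{diss}(G)=\alpha(G)+\nu_s(G)$, and $$f\text{ is satisfiable}\iff \mathrm{diss}(G)=2\alpha(G)\iff \mathrm{diss}(G)=2\nu_s(G).$$
   Context: All graphs are finite, simple and undirected. A set $I$ of vertices of a graph $G$ is a dissociation set if the induced subgraph $G[I]$ has maximum degree at most $1$; $\mathrm{diss}(G)$ is the maximum order of a dissociation set in $G$. $\alpha(G)$ is the independence number. An induced matching is a matching $N$ such that the subgraph of $G$ induced by the vertices covered by $N$ has edge set exactly $N$; $\nu_s(G)$ is the maximum size of an induced matching in $G$. *)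

(* Defs.v *)
From mathcomp Require Import all_boot.
Set Implicit Arguments. Unset Strict Implicit. Unset Printing Implicit Defensive.

Section GraphParams.
Variables (T : finType) (e : rel T).

Definition independent (S : {set T}) : bool :=
  [forall x in S, forall y in S, ~~ e x y].

Definition dissociation (S : {set T}) : bool :=
  [forall x in S, #|[set y in S | e x y]| <= 1].

Definition induced_matching (N : {set {set T}}) : bool :=
  [forall E in N, exists u, exists v, (E == [set u; v]) && (u != v) && e u v]
  && trivIset N
  && [forall u in cover N, forall v in cover N, e u v ==> ([set u; v] \in N)].

Definition alpha : nat := \max_(S : {set T} | independent S) #|S|.
Definition diss : nat := \max_(S : {set T} | dissociation S) #|S|.
Definition nu_s : nat := \max_(N : {set {set T}} | induced_matching N) #|N|.

End GraphParams.

(* A literal over variables x_0..x_{n-1}: (variable, polarity); polarity true = positive. *)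
Definition literal (n : nat) := ('I_n * bool)%type.

Definition cnf3 (m n : nat) := 'I_m -> 'I_3 -> literal n.

Definition lit_true n (a : 'I_n -> bool) (l : literal n) : bool := a l.1 == l.2.

Definition satisfiable m n (f : cnf3 m n) : Prop :=
  exists a : 'I_n -> bool, forall i : 'I_m, exists k : 'I_3, lit_true a (f i k).

Definition lit_neg n (l1 l2 : literal n) : bool := (l1.1 == l2.1) && (l1.2 != l2.2).

(* Vertices of G: (i, k) with i a clause; k = 0,1,2 are x^i,y^i,z^i, and k = 3 is c^i. *)
Definition cnf_vertex (m : nat) := ('I_m * 'I_4)%type.

Definition vlit m n (f : cnf3 m n) (v : cnf_vertex m) : option (literal n) :=
  omap (f v.1) (insub (val v.2) : option 'I_3).

Definition opp_vertices m n (f : cnf3 m n) (u v : cnf_vertex m) : bool :=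
  match vlit f u, vlit f v with
  | Some l1, Some l2 => lit_neg l1 l2
  | _, _ => false
  end.

Definition cnf_graph m n (f : cnf3 m n) : rel (cnf_vertex m) :=
  fun u v => (u != v) && ((u.1 == v.1) || ((u.1 != v.1) && opp_vertices f u v)).

(* Main.v *)
Require Import Defs.
From mathcomp Require Import all_boot zify.
Set Implicit Arguments. Unset Strict Implicit.

Lemma vlit_w m n (f : cnf3 m n) i (k : 'I_3) : vlit f (i, widen_ord (leqnSn 3) k) = Some (f i k).
Proof. by rewrite /vlit /= (valK k). Qed.
Lemma vlit_l m n (f : cnf3 m n) (v : cnf_vertex m) (h : (v.2 < 3)%N) : vlit f v = Some (f v.1 (Ordinal h)).
Proof. by rewrite /vlit insubT. Qed.
Lemma vlit_c m n (f: cnf3 m n) (v : cnf_vertex m) : (3 <= v.2)%N -> vlit f v = None.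
Proof. move=> h; rewrite /vlit insubF //=. by rewrite ltnNge h. Qed.
Lemma dissP (T : finType) (e : rel T) (D : {set T}) x y z : dissociation e D -> x \in D -> y \in D -> z \in D -> e x y -> e x z -> y = z.
Proof. move=> /forall_inP H xD yD zD exy exz. have /card_le1_eqP := H x xD. apply; by rewrite inE ?yD ?zD ?exy ?exz. Qed.
Lemma indepP (T : finType) (e : rel T) (S : {set T}) x y : independent e S -> x \in S -> y \in S -> ~~ e x y.
Proof. move=> /forall_inP H xS yS. exact: (forall_inP (H x xS) y yS). Qed.

Lemma e_irr m n (f : cnf3 m n) u : ~~ cnf_graph f u u.
Proof. by rewrite /cnf_graph eqxx. Qed.
Lemma e_same m n (f : cnf3 m n) (u v : cnf_vertex m) : u.1 = v.1 -> u != v -> cnf_graph f u v.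
Proof. by move=> h1 h2; rewrite /cnf_graph h2 h1 eqxx. Qed.
Lemma e_c1 m n (f : cnf3 m n) (u v : cnf_vertex m) : (3 <= v.2)%N -> cnf_graph f u v -> u.1 = v.1.
Proof.
  move=> h; rewrite /cnf_graph /opp_vertices (vlit_c f h).
  by case: (vlit f u) => [l|]; rewrite /= ?andbF ?orbF => /andP[_ /eqP].
Qed.
Lemma e_c2 m n (f : cnf3 m n) (u v : cnf_vertex m) : (3 <= u.2)%N -> cnf_graph f u v -> u.1 = v.1.
Proof.
  move=> h; rewrite /cnf_graph /opp_vertices (vlit_c f h).
  by rewrite /= ?andbF ?orbF => /andP[_ /eqP].
Qed.
Lemma e_sym m n (f : cnf3 m n) (u v : cnf_vertex m) : cnf_graph f u v = cnf_graph f v u.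
Proof.
  rewrite /cnf_graph /opp_vertices eq_sym (eq_sym u.1).
  case: (vlit f u) => [l1|]; case: (vlit f v) => [l2|] //.
  by rewrite /lit_neg [l1.1 == _]eq_sym [l1.2 == _]eq_sym.
Qed.
Lemma pair_eq m (u v : cnf_vertex m) : u.1 = v.1 -> (u.2 : nat) = v.2 -> u = v.
Proof. case: u v => [u1 u2] [v1 v2] /= -> h; congr pair; exact: val_inj. Qed.

Definition cv m (i : 'I_m) : cnf_vertex m := (i, ord_max).
Definition Cset m : {set cnf_vertex m} := [set cv i | i : 'I_m].
Definition litind m n (f : cnf3 m n) (S : {set cnf_vertex m}) :=
  independent (cnf_graph f) S && [forall v in S, (v.2 < 3)%N].
Definition beta m n (f : cnf3 m n) := \max_(S : {set cnf_vertex m} | litind f S) #|S|.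

Lemma lit_lt m n (f : cnf3 m n) S v : litind f S -> v \in S -> (v.2 < 3)%N.
Proof. by move=> /andP[_ /forall_inP H] /H. Qed.

Lemma indep_inj m n (f : cnf3 m n) S : independent (cnf_graph f) S ->
  {in S &, injective (fun v : cnf_vertex m => v.1)}.
Proof.
  move=> H u v uS vS /= h. apply/eqP; apply: contraT => neq.
  by have := indepP H uS vS; rewrite e_same.
Qed.

Lemma indep_card m n (f : cnf3 m n) S : independent (cnf_graph f) S -> (#|S| <= m)%N.
Proof.
  move=> H; rewrite -(card_in_imset (indep_inj H)).
  by apply: leq_trans (max_card _) _; rewrite card_ord.
Qed.

Lemma C_indep m n (f : cnf3 m n) : independent (cnf_graph f) (Cset m).
Proof.
  apply/forall_inP => x /imsetP[i _ ->]; apply/forall_inP => y /imsetP[j _ ->].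
  apply/negP => /[dup] /(e_c1 (isT : (3 <= (cv j).2)%N)) /= ->.
  by rewrite (negbTE (e_irr _ _)).
Qed.

Lemma card_C m : #|Cset m| = m.
Proof. rewrite card_imset ?card_ord // => i j [] //. Qed.

Lemma alpha_eq m n (f : cnf3 m n) : alpha (cnf_graph f) = m.
Proof.
  apply/eqP; rewrite eqn_leq; apply/andP; split.
  - apply/bigmax_leqP => S HS; exact: indep_card HS.
  - rewrite -{1}(card_C m). exact: (leq_bigmax_cond _ (C_indep f)).
Qed.

Lemma beta_le m n (f : cnf3 m n) : (beta f <= m)%N.
Proof. apply/bigmax_leqP => S /andP[HS _]; exact: indep_card HS. Qed.

Lemma my_disjP (T: finType) (A B : {set T}) : (forall x, x \in A -> x \in B -> False) -> [disjoint A & B].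
Proof. move=> H; rewrite -setI_eq0; apply/eqP/setP => x; rewrite !inE; apply/negP => /andP[]; exact: H. Qed.

Lemma cv_lit m n (f : cnf3 m n) S i : litind f S -> cv i \in S = false.
Proof. by move=> H; apply/negP => /(lit_lt H). Qed.

Lemma nbr_lit m n (f : cnf3 m n) S x w : litind f S -> x \in S -> (w \in S) || (w \in Cset m) ->
  cnf_graph f x w -> w = cv x.1.
Proof.
  move=> H xS => /orP[wS|/imsetP[j _ ->]] exw.
  - by have := indepP (andP H).1 xS wS; rewrite exw.
  - by have /= -> := e_c1 (isT : (3 <= (cv j).2)%N) exw.
Qed.

Lemma nbr_c m n (f : cnf3 m n) S i w : litind f S -> (w \in S) || (w \in Cset m) ->
  cnf_graph f (cv i) w -> w \in S /\ w.1 = i.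
Proof.
  move=> H /orP[wS|/imsetP[j _ ->]] ew.
  - by split=> //; have /= -> := e_c2 (isT : (3 <= (cv i).2)%N) ew.
  - have /= eij := e_c2 (isT : (3 <= (cv i).2)%N) ew.
    by move: ew; rewrite eij (negbTE (e_irr _ _)).
Qed.

Lemma diss_lower m n (f : cnf3 m n) S : litind f S ->
  dissociation (cnf_graph f) (S :|: Cset m) /\ #|S :|: Cset m| = #|S| + m.
Proof.
  move=> H; split.
  - apply/forall_inP => x xD; apply/card_le1_eqP => y z; rewrite !inE.
    move=> /andP[yD exy] /andP[zD exz].
    move: xD; rewrite inE => /orP[xS|/imsetP[i _ Hx]]; last subst x.
    + by rewrite (nbr_lit H xS yD exy) (nbr_lit H xS zD exz).
    + have [yS y1] := nbr_c H yD exy; have [zS z1] := nbr_c H zD exz.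
      apply: (indep_inj (andP H).1) => //; by rewrite z1 y1.
  - have := cardsUI S (Cset m); rewrite card_C.
    suff -> : S :&: Cset m = set0 by rewrite cards0 addn0.
    apply/setP => v; rewrite !inE; apply/negP => /andP[vS /imsetP[i _ Hv]].
    by move: vS; rewrite Hv (cv_lit _ H).
Qed.

Lemma nu_lower m n (f : cnf3 m n) S : litind f S ->
  induced_matching (cnf_graph f) [set [set v; cv v.1] | v in S] /\
  #|[set [set v; cv v.1] | v in S]| = #|S|.
Proof.
  move=> H; have Hi := indep_inj (andP H).1.
  have neqc : forall v, v \in S -> v != cv v.1.
    by move=> v vS; apply/negP => /eqP Hv; move: vS; rewrite Hv (cv_lit _ H).
  split; last first.
    apply: card_in_imset => v w vS wS /= Heq.
    have : v \in [set w; cv w.1] by rewrite -Heq !inE eqxx.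
    rewrite !inE => /orP[/eqP //|/eqP Hv]; by move: vS; rewrite Hv (cv_lit _ H).
  apply/andP; split; first (apply/andP; split).
  - apply/forall_inP => E /imsetP[v vS ->]; apply/existsP; exists v; apply/existsP; exists (cv v.1).
    by rewrite eqxx neqc //= e_same // neqc.
  - apply/trivIsetP => A B /imsetP[v vS ->] /imsetP[w wS ->] neq.
    have vw : v != w by apply: contraNneq neq => ->.
    have vw1 : v.1 != w.1 by apply: contraNneq vw => /Hi ->.
    apply: my_disjP => x; rewrite !inE => /orP[]/eqP-> /orP[]/eqP.
    + by move/eqP: vw.
    + by move=> Hv; move: vS; rewrite Hv (cv_lit _ H).
    + by move=> Hw; move: wS; rewrite -Hw (cv_lit _ H).
    + by case=> Hv; move/eqP: vw1.
  - apply/forall_inP => u /bigcupP[A /imsetP[a aS ->] uA].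
    apply/forall_inP => v /bigcupP[B /imsetP[b bS ->] vB]; apply/implyP => euv.
    move: uA vB; rewrite !inE => /orP[]/eqP Hu /orP[]/eqP Hv; subst u v.
    + by have := indepP (andP H).1 aS bS; rewrite euv.
    + have /= ab := e_c1 (isT : (3 <= (cv b.1).2)%N) euv.
      by rewrite (Hi _ _ aS bS ab); apply: imset_f.
    + have /= ab := e_c2 (isT : (3 <= (cv a.1).2)%N) euv.
      by rewrite (Hi _ _ aS bS ab) setUC; apply: imset_f.
    + have /= ab := e_c2 (isT : (3 <= (cv a.1).2)%N) euv.
      by move: euv; rewrite ab (negbTE (e_irr _ _)).
Qed.

Lemma diss_upper m n (f : cnf3 m n) D : dissociation (cnf_graph f) D ->
  exists S, litind f S /\ (#|D| <= m + #|S|)%N.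
Proof.
  move=> HD.
  pose S := [set v in D | [exists w in D, (w.1 == v.1) && (v.2 < w.2)%N]].
  have Sprop : forall v, v \in S -> v \in D /\ exists2 w, w \in D & w.1 = v.1 /\ (v.2 < w.2)%N.
    move=> v; rewrite inE => /andP[vD /exists_inP[w wD /andP[/eqP h1 h2]]].
    by split=> //; exists w.
  exists S; split.
  - apply/andP; split.
    + apply/forall_inP => v vS; apply/forall_inP => w wS; apply/negP => evw.
      have [vD [v' v'D [h1 h2]]] := Sprop v vS.
      have [wD [w' w'D [h3 h4]]] := Sprop w wS.
      have evv' : cnf_graph f v v'.
        apply: e_same => //; apply/negP => /eqP Hv; by move: h2; rewrite -Hv ltnn.
      have wv' := dissP HD vD wD v'D evw evv'. subst v'.
      have evw' : cnf_graph f v w'.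
        apply: e_same; first by rewrite h3.
        apply/negP => /eqP Hv; move: h4; rewrite -Hv; lia.
      have := dissP HD vD wD w'D evw evw'. move=> Hw; move: h4; rewrite -Hw ltnn //.
    + apply/forall_inP => v /Sprop[_ [w _ [_ h]]]. have := ltn_ord w.2. lia.
  - rewrite -(cardsID S D).
    have -> : D :&: S = S.
      by apply/setP => v; rewrite inE; case vS: (v \in S); rewrite ?andbF ?andbT //; case: (Sprop v vS).
    rewrite addnC leq_add2r.
    have Hinj : {in D :\: S &, injective (fun v : cnf_vertex m => v.1)}.
      move=> u v; rewrite !inE => /andP[uS uD] /andP[vS vD] /= h.
      case: (ltngtP u.2 v.2) => h2.
      + move: uS; rewrite uD /=; case/negP; apply/exists_inP; exists v => //. by rewrite h eqxx h2.
      + move: vS; rewrite vD /=; case/negP; apply/exists_inP; exists u => //. by rewrite h eqxx h2.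
      + exact: pair_eq.
    rewrite -(card_in_imset Hinj).
    by apply: leq_trans (max_card _) _; rewrite card_ord.
Qed.

Definition ltv m (u v : cnf_vertex m) : bool :=
  (u.2 < v.2)%N || ((u.2 == v.2 :> nat) && (u.1 < v.1)%N).

Lemma ltv_total m (u v : cnf_vertex m) : u != v -> ltv u v || ltv v u.
Proof.
  move=> neq; rewrite /ltv.
  case: (ltngtP u.2 v.2) => //= h2.
  case: (ltngtP u.1 v.1) => //= h1.
  by move: neq; rewrite (pair_eq (val_inj h1) h2) eqxx.
Qed.

Lemma ltv_asym m (u v : cnf_vertex m) : ltv u v -> ltv v u -> False.
Proof. rewrite /ltv; lia. Qed.

Lemma nu_upper m n (f : cnf3 m n) N : induced_matching (cnf_graph f) N ->
  exists S, litind f S /\ (#|N| <= #|S|)%N.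
Proof.
  move=> /andP[/andP[H1 H2] H3].
  have IM1 : forall E, E \in N -> exists u v, [/\ E = [set u; v], u != v & cnf_graph f u v].
    move=> E EN; have /existsP[u /existsP[v /andP[/andP[/eqP -> uv] euv]]] := forall_inP H1 E EN.
    by exists u, v.
  have IM3 : forall u v, u \in cover N -> v \in cover N -> cnf_graph f u v -> [set u; v] \in N.
    move=> u v uN vN; exact: (implyP (forall_inP (forall_inP H3 u uN) v vN)).
  have inc : forall E x, E \in N -> x \in E -> x \in cover N.
    by move=> E x EN xE; apply/bigcupP; exists E.
  have same : forall E1 E2 x, E1 \in N -> E2 \in N -> x \in E1 -> x \in E2 -> E1 = E2.
    move=> E1 E2 x E1N E2N x1 x2; apply/eqP; apply: contraT => neq.
    by have := disjointFr (trivIsetP H2 E1 E2 E1N E2N neq) x1; rewrite x2.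
  have deg1 : forall u a b, u \in cover N -> a \in cover N -> b \in cover N ->
      cnf_graph f u a -> cnf_graph f u b -> a = b.
    move=> u a b uN aN bN ea eb.
    have Hab := same _ _ u (IM3 _ _ uN aN ea) (IM3 _ _ uN bN eb) (setU11 _ _) (setU11 _ _).
    have : b \in [set u; a] by rewrite Hab !inE eqxx orbT.
    rewrite !inE => /orP[/eqP Hb|/eqP //]. by move: eb; rewrite Hb (negbTE (e_irr _ _)).
  pose S := [set v in cover N | [exists w in cover N, cnf_graph f v w && ltv v w]].
  have Sprop : forall v, v \in S -> v \in cover N /\ exists2 w, w \in cover N & cnf_graph f v w /\ ltv v w.
    move=> v; rewrite inE => /andP[vD /exists_inP[w wD /andP[h1 h2]]].
    by split=> //; exists w.
  have HS : litind f S.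
    apply/andP; split.
    + apply/forall_inP => v vS; apply/forall_inP => w wS; apply/negP => evw.
      have [vN [v' v'N [h1 h2]]] := Sprop v vS.
      have [wN [w' w'N [h3 h4]]] := Sprop w wS.
      have Hv' := deg1 _ _ _ vN wN v'N evw h1. subst v'.
      have Hw' := deg1 _ _ _ wN vN w'N (etrans (e_sym _ _ _) evw) h3. subst w'.
      exact: ltv_asym h2 h4.
    + apply/forall_inP => v /Sprop[_ [w _ [evw h]]].
      rewrite ltnNge; apply/negP => h3.
      move: h; rewrite /ltv => /orP[|/andP[/eqP h4 h5]]. { move=> hvw; have := leq_ltn_trans (leq_ltn_trans h3 hvw) (ltn_ord w.2). by rewrite ltnn. }
      have h6 : (3 <= w.2)%N by rewrite -h4.
      have := e_c1 h6 evw => h7. by move: h5; rewrite h7 ltnn.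
  exists S; split => //.
  have nonempty : forall E, E \in N -> exists2 v, v \in E & v \in S.
    move=> E EN; have [u [v [HE uv euv]]] := IM1 E EN.
    have uN : u \in cover N by apply: (inc E) => //; rewrite HE !inE eqxx.
    have vN : v \in cover N by apply: (inc E) => //; rewrite HE !inE eqxx orbT.
    case/orP: (ltv_total uv) => h.
    + exists u; first by rewrite HE !inE eqxx.
      by rewrite inE uN; apply/exists_inP; exists v => //; rewrite euv h.
    + exists v; first by rewrite HE !inE eqxx orbT.
      by rewrite inE vN; apply/exists_inP; exists u => //; rewrite e_sym euv h.
  pose g (E : {set cnf_vertex m}) := [pick v in E :&: S].
  have gS : forall E, E \in N -> exists2 v, g E = Some v & v \in E /\ v \in S.
    move=> E EN; rewrite /g; case: pickP => [v|H0].
    + by rewrite inE => /andP[vE vS]; exists v.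
    + have [v vE vS] := nonempty E EN. by have := H0 v; rewrite inE vE vS.
  have ginj : {in N &, injective g}.
    move=> E1 E2 E1N E2N.
    have [v1 -> [v1E v1S]] := gS E1 E1N; have [v2 -> [v2E v2S]] := gS E2 E2N.
    case=> h; subst v2. exact: same v1E v2E.
  rewrite -(card_in_imset ginj).
  have -> : #|S| = #|[set Some v | v in S]| by rewrite card_imset //; move=> x y [].
  apply: subset_leq_card; apply/subsetP => o /imsetP[E EN ->].
  have [v -> [_ vS]] := gS E EN. exact: imset_f.
Qed.

Lemma sat_iff m n (f : cnf3 m n) : satisfiable f <-> exists S, litind f S /\ #|S| = m.
Proof.
  split.
  - move=> [a Ha].
    pose g i := odflt ord0 [pick k | lit_true a (f i k)].
    have Hg : forall i, lit_true a (f i (g i)).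
      move=> i; rewrite /g; case: pickP => [k //|H0].
      by have [k Hk] := Ha i; rewrite H0 in Hk.
    pose S := [set (i, widen_ord (leqnSn 3) (g i)) | i : 'I_m].
    exists S; split; last by rewrite card_imset ?card_ord // => i j [].
    apply/andP; split.
    + apply/forall_inP => x /imsetP[i _ ->]; apply/forall_inP => y /imsetP[j _ ->].
      rewrite /cnf_graph /opp_vertices !vlit_w /=.
      apply/negP => /andP[neq /orP[/eqP hij|/andP[_ /andP[/eqP h1 h2]]]].
      * by move: neq; rewrite hij eqxx.
      * have := Hg i; have := Hg j; rewrite /lit_true h1 => /eqP -> /eqP e2.
        by move: h2; rewrite e2 eqxx.
    + by apply/forall_inP => x /imsetP[i _ ->] /=.
  - move=> [S [HS cS]].
    have Hi := indep_inj (andP HS).1.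
    have Himg : [set v.1 | v in S] = setT.
      by apply/eqP; rewrite eqEcard subsetT cardsT card_ord card_in_imset // cS leqnn.
    pose a := fun x : 'I_n => [exists v in S, if vlit f v is Some l then (l.1 == x) && l.2 else false].
    exists a; move=> i.
    have : i \in [set v.1 | v in S] by rewrite Himg inE.
    case/imsetP => v vS ->.
    have h := lit_lt HS vS.
    exists (Ordinal h).
    rewrite /lit_true.
    case Hl2 : (f v.1 (Ordinal h)).2.
    + rewrite eqb_id; apply/exists_inP; exists v => //; by rewrite (vlit_l f h) eqxx Hl2.
    + rewrite eqbF_neg; apply/negP => /exists_inP[w wS].
      case Hw : (vlit f w) => [l'|] // /andP[/eqP h1 h2].
      have vw : v != w.
        apply/negP => /eqP Hvw; subst w. move: Hw; rewrite (vlit_l f h) => -[Hl].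
        by move: h2; rewrite -Hl Hl2.
      have evw : cnf_graph f v w.
        rewrite /cnf_graph vw /= /opp_vertices Hw (vlit_l f h) /lit_neg h1 eqxx Hl2 h2 /=.
        by case: (v.1 == w.1).
      by have := indepP (andP HS).1 vS wS; rewrite evw.
Qed.

Theorem mainTheorem8 (m n : nat) (f : cnf3 m n) :
  alpha (cnf_graph f) = m /\
  diss (cnf_graph f) = alpha (cnf_graph f) + nu_s (cnf_graph f) /\
  (satisfiable f <-> diss (cnf_graph f) = 2 * alpha (cnf_graph f)) /\
  (diss (cnf_graph f) = 2 * alpha (cnf_graph f) <->
   diss (cnf_graph f) = 2 * nu_s (cnf_graph f)).
Proof.
  have Ha := alpha_eq f.
  have Hb := beta_le f.
  have Hd : diss (cnf_graph f) = m + beta f.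
    apply/eqP; rewrite eqn_leq; apply/andP; split.
    - apply/bigmax_leqP => D HD; have [S [HS HDS]] := diss_upper HD.
      apply: leq_trans HDS _; rewrite leq_add2l; exact: (leq_bigmax_cond _ HS).
    - have H0 : forall S, litind f S -> (m + #|S| <= diss (cnf_graph f))%N.
        move=> S HS; have [HD cD] := diss_lower HS.
        rewrite addnC -cD; exact: (leq_bigmax_cond _ HD).
      have H1 : (beta f <= diss (cnf_graph f) - m)%N.
        apply/bigmax_leqP => S HS; have := H0 S HS; lia.
      have H2 : (m <= diss (cnf_graph f))%N.
        have : litind f set0.
          apply/andP; split; apply/forall_inP => x; by rewrite inE.
        move/H0; rewrite cards0; lia.
      lia.
  have Hn : nu_s (cnf_graph f) = beta f.
    apply/eqP; rewrite eqn_leq; apply/andP; split.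
    - apply/bigmax_leqP => N HN; have [S [HS HNS]] := nu_upper HN.
      apply: leq_trans HNS _; exact: (leq_bigmax_cond _ HS).
    - apply/bigmax_leqP => S HS; have [HN cN] := nu_lower HS.
      rewrite -cN; exact: (leq_bigmax_cond _ HN).
  have Hs : satisfiable f <-> beta f = m.
    rewrite sat_iff; split.
    - move=> [S [HS cS]]; apply/eqP; rewrite eqn_leq Hb /= -{1}cS.
      exact: (leq_bigmax_cond _ HS).
    - move=> Hbm.
      have h0 : (0 < #|[pred S | litind f S]|)%N.
        apply/card_gt0P; exists set0; rewrite inE /=.
        apply/andP; split; apply/forall_inP => x; by rewrite inE.
      have [S HS HSeq] := @eq_bigmax_cond _ [pred S | litind f S] (fun S => #|S|) h0.
      have HbS : beta f = #|S| by exact: HSeq.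
      exists S; split; first exact: HS.
      by rewrite -HbS.
  rewrite Hd Hn Ha Hs; lia.
Qed.
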